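(* Let $p,q$ be integers with $2\le q<p$, and let $\tau:\Sigma_q^\ast\to\{-1,0,\ldots,p-2\}$ be a regular mapping. Then for every $m\in\mathbb Z$ and every $k\in\mathbb N$, \[ \#\big(\Lambda(\tau)\cap[m,m+p^k)\big)\le q^k. \]
   Context: Let $\Sigma_q=\{0,1,\ldots,q-1\}$, $\Sigma_q^n$ the words of length $n$, and $\Sigma_q^\ast=\bigcup_{n\ge1}\Sigma_q^n$. A map $\tau:\Sigma_q^\ast\to\{-1,0,\ldots,p-2\}$ is a regular mapping if (i) $\tau(0^n)=0$ for all $n\ge1$; (ii) $\tau(i_1\cdots i_n)\in i_n+q\mathbb Z$ for every word $i_1\cdots i_n$; (iii) for every $I\in\Sigma_q^\ast$, $\tau(I0^l)=0$ for all sufficiently large $l$. For $I=i_1\cdots i_n\in\Sigma_q^\ast$ and $k\ge1$, let $I_{1,k}=i_1\cdots i_k$ if $k\le n$ and $I_{1,k}=i_1\cdots i_n0^{k-n}$ if $k>n$. Set $\tau^\ast(I)=\sum_{k=1}^\infty \tau(I_{1,k})p^{k-1}$ (a finite sum by (iii)), and $\Lambda(\tau)=\{\tau^\ast(I): I\in\Sigma_q^\ast\}$. *)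

(* Defs.v *)
From HB Require Import structures.
From mathcomp Require Import all_boot all_order all_algebra.
From mathcomp Require Import boolp.
Set Implicit Arguments. Unset Strict Implicit. Unset Printing Implicit Defensive.
Import Order.TTheory GRing.Theory Num.Theory.
Local Open Scope ring_scope.

(* Words over Sigma_q = {0,...,q-1} are represented as [seq nat] whose
   letters are all < q; Sigma_q^* consists of the nonempty such words. *)
Definition is_word (q : nat) (I : seq nat) : Prop :=
  (0 < size I)%N /\ all (fun i => (i < q)%N) I.

Definition prefix_pad (I : seq nat) (k : nat) : seq nat :=
  take k I ++ nseq (k - size I) 0%N.

Definition regular_mapping (p q : nat) (tau : seq nat -> int) : Prop :=
  (forall I, is_word q I -> -1 <= tau I <= (p%:Z - 2))
  /\ (forall n : nat, (1 <= n)%N -> tau (nseq n 0%N) = 0)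
  /\ (forall I, is_word q I -> (tau I = (last 0%N I)%:Z %[mod q%:Z])%Z)
  /\ (forall I, is_word q I ->
        exists L : nat, forall l : nat, (L <= l)%N -> tau (I ++ nseq l 0%N) = 0).

(* x = tau^*(I) = sum_{k>=1} tau(I_{1,k}) p^{k-1}: the series is a finite sum;
   [tau_star_is] says that all terms with index k > N vanish and x is the
   partial sum up to N (this value does not depend on such N). *)
Definition tau_star_is (p : nat) (tau : seq nat -> int) (I : seq nat) (x : int)
  : Prop :=
  exists N : nat,
    (forall k : nat, (N < k)%N -> tau (prefix_pad I k) = 0) /\
    x = \sum_(1 <= k < N.+1) tau (prefix_pad I k) * (p%:Z) ^+ (k.-1).

Definition Lambda (p q : nat) (tau : seq nat -> int) (x : int) : Prop :=
  exists I : seq nat, is_word q I /\ tau_star_is p tau I x.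

(* Main.v *)
Require Import Defs.
From HB Require Import structures.
From mathcomp Require Import all_boot all_order all_algebra.
From mathcomp Require Import boolp.
From mathcomp Require Import zify ring lra.
Import Order.TTheory GRing.Theory Num.Theory.
Local Open Scope ring_scope.

Lemma size_pp I k : size (prefix_pad I k) = k.
Proof. rewrite /prefix_pad size_cat size_take size_nseq; case: ltnP => H; lia. Qed.

Lemma nth_pp I k j : (j < k)%N -> nth 0%N (prefix_pad I k) j = nth 0%N I j.
Proof.
move=> jk; rewrite /prefix_pad nth_cat size_take.
case: (ltnP k (size I)) => Hk.
  by rewrite jk nth_take.
case: ltnP => Hj; first by rewrite nth_take.
by rewrite nth_nseq nth_default //; case: ifP.
Qed.

Lemma pp_eq I J k j : (j <= k)%N ->
  (forall i, (i < k)%N -> nth 0%N I i = nth 0%N J i) ->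
  prefix_pad I j = prefix_pad J j.
Proof.
move=> jk H; apply: (@eq_from_nth _ 0%N); first by rewrite !size_pp.
move=> i; rewrite size_pp => ij; rewrite !nth_pp //; apply: H; lia.
Qed.

Section Sums.
Variables (p : nat) (t : nat -> int).
Local Notation S n := (\sum_(1 <= j < n.+1) t j * (p%:Z) ^+ j.-1).

Lemma sum_ext N : (forall j, (N < j)%N -> t j = 0) ->
  forall n, (N <= n)%N -> S n = S N.
Proof.
move=> H; elim=> [|n IH] Hn; first by have -> : N = 0%N by lia.
case: (ltnP N n.+1) => Hn'; last by have -> : N = n.+1 by lia.
rewrite big_nat_recr //= H // mul0r addr0; apply: IH; lia.
Qed.

Lemma sum_mod k : forall n, exists c : int,
  S n = S (minn n k) + c * (p%:Z) ^+ k.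
Proof.
elim=> [|n [c IH]]; first by exists 0; rewrite min0n mul0r addr0.
rewrite big_nat_recr //= IH.
case: (ltnP n k) => Hn.
  have -> : minn n.+1 k = n.+1 by apply/minn_idPl.
  exists c; rewrite [in RHS]big_nat_recr //=; ring.
have -> : minn n.+1 k = k by apply/minn_idPr; lia.
exists (c + t n.+1 * (p%:Z) ^+ (n - k)).
rewrite mulrDl -!addrA; congr (_ + _); congr (_ + _).
by rewrite -mulrA -exprD subnK.
Qed.
End Sums.

Lemma star_mod p tau I x k : tau_star_is p tau I x ->
  exists c : int, x = \sum_(1 <= j < k.+1) tau (prefix_pad I j) * (p%:Z) ^+ j.-1
                      + c * (p%:Z) ^+ k.
Proof.
move=> [N [HN ->]].
have [c Hc] := sum_mod p (fun j => tau (prefix_pad I j)) k (maxn N k).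
exists c.
rewrite -(@sum_ext p (fun j => tau (prefix_pad I j)) N HN (maxn N k)) ?leq_maxl //.
by rewrite Hc; have -> : minn (maxn N k) k = k by lia.
Qed.

Definition W (p q : nat) (tau : seq nat -> int) (x : int) : seq nat :=
  match pselect (Lambda p q tau x) with
  | left H => proj1_sig (cid H)
  | right _ => [::]
  end.

Lemma W_spec p q tau x : Lambda p q tau x ->
  is_word q (W p q tau x) /\ tau_star_is p tau (W p q tau x) x.
Proof.
rewrite /W; case: pselect => // H _; exact: (proj2_sig (cid H)).
Qed.

Lemma nth_lt q I i : (0 < q)%N -> is_word q I -> (nth 0%N I i < q)%N.
Proof.
move=> q0 [_ /allP HI]; case: (ltnP i (size I)) => Hi.
  exact: (HI _ (mem_nth 0%N Hi)).
by rewrite nth_default.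
Qed.

Theorem lemma2p3 (p q : nat) (tau : seq nat -> int) :
  (2 <= q)%N -> (q < p)%N -> regular_mapping p q tau ->
  forall (m : int) (k : nat),
    (#|[set i : 'I_(p ^ k) | `[< Lambda p q tau (m + (i : nat)%:Z) >] ]| <= q ^ k)%N.
Proof.
move=> q2 qp _ m k.
have q0 : (0 < q)%N by lia.
set S := [set i : 'I_(p ^ k) | _].
pose F (i : 'I_(p ^ k)) : {ffun 'I_k -> 'I_q} :=
  [ffun j : 'I_k => Ordinal (ltn_pmod (nth 0%N (W p q tau (m + (i : nat)%:Z)) j) q0)].
have inj : {in S &, injective F}.
  move=> i i'; rewrite !inE => /asboolP Hi /asboolP Hi' HF.
  have [wI sI] := W_spec _ _ _ _ Hi; have [wI' sI'] := W_spec _ _ _ _ Hi'.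
  set I := W p q tau _ in wI sI HF; set I' := W p q tau _ in wI' sI' HF.
  have Hn : forall j, (j < k)%N -> nth 0%N I j = nth 0%N I' j.
    move=> j jk; have := congr1 (fun f : {ffun 'I_k -> 'I_q} => val (f (Ordinal jk))) HF.
    by rewrite /= !ffunE /= !modn_small //; apply: nth_lt.
  have [c Hc] := @star_mod _ _ _ _ k sI; have [c' Hc'] := @star_mod _ _ _ _ k sI'.
  have HG : \sum_(1 <= j < k.+1) tau (prefix_pad I j) * (p%:Z) ^+ j.-1 =
            \sum_(1 <= j < k.+1) tau (prefix_pad I' j) * (p%:Z) ^+ j.-1.
    apply: eq_big_nat => j /andP [_ jk]; congr (tau _ * _); apply: (@pp_eq _ _ k) => //.
  rewrite HG in Hc.
  apply: val_inj => /=.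
  have ltP : forall (l : 'I_(p ^ k)), ((l : nat)%:Z < (p%:Z) ^+ k)%R.
    by move=> l; rewrite -[Posz p]natz -natrX natz ltz_nat ltn_ord.
  have := ltP i; have := ltP i'.
  set P := (p%:Z) ^+ k; set G := \sum_(_ <= _ < _) _ in Hc Hc'.
  move=> h1 h2.
  have : (i : nat)%:Z = i'%:Z.
    have E : (i : nat)%:Z - i'%:Z = (c - c') * P.
      have -> : (i : nat)%:Z = m + i - m by rewrite addrC addKr.
      have -> : (i' : nat)%:Z = m + i' - m by rewrite addrC addKr.
      rewrite Hc Hc'; ring.
    move: E h1 h2; clear; move: (c - c') => d; move: (i : nat) (i' : nat) => a b.
    move=> E h1 h2; clearbody P; have P0 : 0 <= P by lia. case: (ltgtP d 0) => Hd; last (by rewrite Hd mul0r in E; lia); [have : 0 <= (- d - 1) * P by apply: mulr_ge0 =>//; lia | have : 0 <= (d - 1) * P by apply: mulr_ge0 =>//; lia]; nia.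
  by case.
rewrite -(card_in_imset inj).
apply: leq_trans (max_card _) _.
by rewrite card_ffun !card_ord.
Qed.
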